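(* Let $a, d, \varepsilon \in \mathbb{R}$ and $k \in \mathbb{N}$, $k \geq 1$, with $0 < \varepsilon \leq d/2$, $a - \varepsilon > 0$ and $a + kd + \varepsilon < 1$. Let $p : \mathbb{R} \to \{0,1\}$ be the pulse function of the arithmetic progression $A = \{a, a+d, \dots, a+kd\}$ with parameter $\varepsilon$. Let $y_1, y_2 \in \mathbb{Z}$ with $y_2 - y_1 = k$, and let $P$ be a convex quadrilateral with vertices $(\ell_1, y_1)$, $(r_1, y_1)$, $(\ell_2, y_2)$, $(r_2, y_2)$. Suppose that (1) $\ell_1 < r_1$ and $\ell_2 < r_2$; (2) $\{\ell_1\} = a + \varepsilon$ and $\{\ell_2\} = a + kd + \varepsilon$; (3) $\{r_1\} = a - \varepsilon$ and $\{r_2\} = a + kd - \varepsilon$; (4) $k$ divides $\lfloor \ell_2 \rfloor - \lfloor \ell_1 \rfloor$ and $k$ divides $\lfloor r_2 \rfloor - \lfloor r_1 \rfloor$. Then there exists $M \in \mathbb{N}$ such that $$\Big| \big( t\,(-1,0)^T + P \big) \cap \mathbb{Z}^2 \Big| = M + p(\{t\}) \quad \text{for all } t \in [0,1].$$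
   Context: $\{x\} = x - \lfloor x \rfloor$ denotes the fractional part of $x \in \mathbb{R}$. For a finite set $A \subset \mathbb{R}$ and $\varepsilon > 0$, the pulse function of $A$ with parameter $\varepsilon$ is $p(x) = 0$ if $|x - y| < \varepsilon$ for some $y \in A$, and $p(x) = 1$ otherwise. The arithmetic progression defined by $(a,k,d)$ is $\{a, a+d, a+2d, \dots, a+kd\}$. $t\,(-1,0)^T + P = \{x + t(-1,0)^T : x \in P\}$. *)

(* Defs.v *)
From Stdlib Require Import Reals Lra Lia ZArith List Classical ClassicalEpsilon.
Open Scope R_scope.

(* floor x : the greatest integer <= x  (up x is the integer with x < up x <= x+1) *)
Definition floorR (x : R) : Z := (up x - 1)%Z.

Definition frac (x : R) : R := x - IZR (floorR x).

Definition arith_prog (a : R) (k : nat) (d : R) (y : R) : Prop :=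
  exists i : nat, (i <= k)%nat /\ y = a + INR i * d.

Definition pulse (A : R -> Prop) (eps : R) (x : R) : nat :=
  if excluded_middle_informative (exists y, A y /\ Rabs (x - y) < eps) then 0%nat else 1%nat.

Definition conv4 (p1 p2 p3 p4 : R * R) (q : R * R) : Prop :=
  exists c1 c2 c3 c4 : R,
    0 <= c1 /\ 0 <= c2 /\ 0 <= c3 /\ 0 <= c4 /\ c1 + c2 + c3 + c4 = 1 /\
    fst q = c1 * fst p1 + c2 * fst p2 + c3 * fst p3 + c4 * fst p4 /\
    snd q = c1 * snd p1 + c2 * snd p2 + c3 * snd p3 + c4 * snd p4.

Definition translate (v : R * R) (S : R * R -> Prop) (q : R * R) : Prop :=
  exists p, S p /\ q = (fst p + fst v, snd p + snd v).

(* |S ∩ Z^2| = N : the lattice points of S are exactly the N distinct entries of a list *)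
Definition lattice_card (S : R * R -> Prop) (N : nat) : Prop :=
  exists l : list (Z * Z), NoDup l /\ length l = N /\
    forall z : Z * Z, In z l <-> S (IZR (fst z), IZR (snd z)).

(* Main.v *)
Require Import Defs.
From Stdlib Require Import Reals ZArith.
From Stdlib Require Import Lra Lia List Classical ClassicalEpsilon.
Open Scope R_scope.

Lemma frac_small t : 0 <= t < 1 -> frac t = t.
Proof.
  intros [H0 H1]. unfold frac, floorR.
  rewrite <- (tech_up t 1); [|lra|lra]. simpl. lra.
Qed.

Lemma frac_one : frac 1 = 0.
Proof.
  unfold frac, floorR. rewrite <- (tech_up 1 2); [|lra|lra]. simpl. lra.
Qed.

Lemma lo_char (F X : Z) (f t : R) : 0 < f < 1 -> 0 <= t <= 1 ->
  (IZR F + f <= IZR X + t <-> (F + (if Rlt_dec t f then 1 else 0) <= X)%Z).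
Proof.
  intros Hf Ht. destruct (Rlt_dec t f) as [h|h]; split; intro H.
  - assert (IZR F < IZR X) as H0 by lra. apply lt_IZR in H0. lia.
  - apply IZR_le in H. rewrite plus_IZR in H. lra.
  - assert (IZR (F - 1) < IZR X) as H0 by (rewrite minus_IZR; lra).
    apply lt_IZR in H0. lia.
  - apply IZR_le in H. rewrite plus_IZR in H. lra.
Qed.

Lemma hi_char (F X : Z) (f t : R) : 0 < f < 1 -> 0 <= t <= 1 ->
  (IZR X + t <= IZR F + f <-> (X <= F - (if Rlt_dec f t then 1 else 0))%Z).
Proof.
  intros Hf Ht. destruct (Rlt_dec f t) as [h|h]; split; intro H.
  - assert (IZR X < IZR F) as H0 by lra. apply lt_IZR in H0. lia.
  - apply IZR_le in H. rewrite minus_IZR in H. lra.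
  - assert (IZR X < IZR (F + 1)) as H0 by (rewrite plus_IZR; lra).
    apply lt_IZR in H0. lia.
  - apply IZR_le in H. rewrite minus_IZR in H. lra.
Qed.

Fixpoint zsum (f : nat -> Z) (l : list nat) : Z :=
  match l with nil => 0%Z | x :: l' => (f x + zsum f l')%Z end.

Lemma zsum_ext f g l : (forall n, In n l -> f n = g n) -> zsum f l = zsum g l.
Proof.
  induction l; simpl; intros H; auto. rewrite H by auto. rewrite IHl; auto.
Qed.

Lemma zsum_sub f g l : zsum (fun n => f n - g n)%Z l = (zsum f l - zsum g l)%Z.
Proof. induction l; simpl; lia. Qed.

Lemma zsum_zero f l : (forall n, In n l -> f n = 0%Z) -> zsum f l = 0%Z.
Proof. induction l; simpl; intros H; auto. rewrite H by auto. rewrite IHl; auto. Qed.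

Lemma zsum_one f l n0 : NoDup l -> In n0 l -> f n0 = 1%Z ->
  (forall n, In n l -> n <> n0 -> f n = 0%Z) -> zsum f l = 1%Z.
Proof.
  induction l as [|x l IH]; simpl; intros Hnd Hin Hf Ho; [contradiction|].
  inversion Hnd; subst. destruct Hin as [<-|Hin].
  - rewrite zsum_zero. lia. intros n Hn. apply Ho; auto. intros ->; contradiction.
  - rewrite IH; auto. rewrite Ho; auto. intros ->; contradiction.
Qed.

Lemma zsum_ge f l : (forall n, In n l -> (f n >= 1)%Z) -> (zsum f l >= Z.of_nat (length l))%Z.
Proof. induction l; simpl; intros H.
  - lia.
  - pose proof (H a (or_introl eq_refl)).
    assert (zsum f l >= Z.of_nat (length l))%Z by (apply IHl; auto). lia. Qed.

Lemma length_flat_map_z {B} (g : nat -> list B) l :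
  Z.of_nat (length (flat_map g l)) = zsum (fun n => Z.of_nat (length (g n))) l.
Proof. induction l; simpl; auto. rewrite length_app. lia. Qed.

Lemma NoDup_flat_map' {B} (g : nat -> list B) l : NoDup l -> (forall n, In n l -> NoDup (g n)) ->
  (forall n n' z, In z (g n) -> In z (g n') -> n = n') -> NoDup (flat_map g l).
Proof.
  induction l as [|x l IH]; simpl; intros Hl Hg Hd. constructor.
  inversion Hl; subst. apply NoDup_app; auto.
  intros z Hz Hz'. apply in_flat_map in Hz'. destruct Hz' as [n [Hn Hzn]].
  assert (x = n) by (eapply Hd; eauto). subst; contradiction.
Qed.

Lemma row_in (lo hi c X Y : Z) :
  In (X, Y) (map (fun i : nat => (lo + Z.of_nat i, c)%Z) (seq 0 (Z.to_nat (hi - lo + 1))))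
  <-> Y = c /\ (lo <= X <= hi)%Z.
Proof.
  rewrite in_map_iff. split.
  - intros [i [Hi Hs]]. apply in_seq in Hs. injection Hi; intros; subst. lia.
  - intros [-> HX]. exists (Z.to_nat (X - lo)). split.
    + f_equal. lia.
    + apply in_seq. lia.
Qed.

Lemma row_nodup (lo n c : Z) :
  NoDup (map (fun i : nat => (lo + Z.of_nat i, c)%Z) (seq 0 (Z.to_nat n))).
Proof.
  apply NoDup_map_NoDup_ForallPairs. intros x y _ _ H. injection H. lia.
  apply seq_NoDup.
Qed.

Lemma translate_iff t (S : R * R -> Prop) u v :
  translate (t * -1, t * 0) S (u, v) <-> S (u + t, v).
Proof.
  split.
  - intros [[p1 p2] [Hp He]]. simpl in He. injection He; intros.
    replace (u + t, v) with (p1, p2); auto. f_equal; lra.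
  - intros H. exists (u + t, v). split; auto. simpl. f_equal; ring.
Qed.

Lemma LR_lt s l1 r1 l2 r2 : 0 <= s <= 1 -> l1 < r1 -> l2 < r2 ->
  (1 - s) * l1 + s * l2 < (1 - s) * r1 + s * r2.
Proof.
  intros Hs H1 H2.
  destruct (Rlt_dec 0 (1 - s)).
  - assert (0 < (1 - s) * (r1 - l1)) by (apply Rmult_lt_0_compat; lra).
    assert (0 <= s * (r2 - l2)) by (apply Rmult_le_pos; lra). lra.
  - assert (0 < s * (r2 - l2)) by (apply Rmult_lt_0_compat; lra).
    assert (0 <= (1 - s) * (r1 - l1)) by (apply Rmult_le_pos; lra). lra.
Qed.

Lemma conv4_char l1 r1 l2 r2 y1 y2 K x y : K > 0 -> y2 = y1 + K -> l1 < r1 -> l2 < r2 ->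
  (conv4 (l1, y1) (r1, y1) (l2, y2) (r2, y2) (x, y) <->
   (0 <= (y - y1) / K <= 1 /\
    (1 - (y - y1) / K) * l1 + ((y - y1) / K) * l2 <= x <=
    (1 - (y - y1) / K) * r1 + ((y - y1) / K) * r2)).
Proof.
  intros HK Hy H1 H2. split.
  - intros (c1 & c2 & c3 & c4 & h1 & h2 & h3 & h4 & hs & hx & hy). simpl in hx, hy.
    assert (Hs : (y - y1) / K = c3 + c4) by (rewrite hy, Hy; replace c1 with (1 - c2 - c3 - c4) by lra; field; lra).
    rewrite Hs.
    assert (E1 : x - ((1 - (c3 + c4)) * l1 + (c3 + c4) * l2) = c2 * (r1 - l1) + c4 * (r2 - l2))
      by (rewrite hx; replace c1 with (1 - c2 - c3 - c4) by lra; ring).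
    assert (E2 : (1 - (c3 + c4)) * r1 + (c3 + c4) * r2 - x = c1 * (r1 - l1) + c3 * (r2 - l2))
      by (rewrite hx; replace c2 with (1 - c1 - c3 - c4) by lra; ring).
    assert (0 <= c2 * (r1 - l1)) by (apply Rmult_le_pos; lra).
    assert (0 <= c4 * (r2 - l2)) by (apply Rmult_le_pos; lra).
    assert (0 <= c1 * (r1 - l1)) by (apply Rmult_le_pos; lra).
    assert (0 <= c3 * (r2 - l2)) by (apply Rmult_le_pos; lra).
    lra.
  - set (s := (y - y1) / K). intros [Hs Hx].
    pose proof (LR_lt s l1 r1 l2 r2 Hs H1 H2) as HLR.
    set (L := (1 - s) * l1 + s * l2) in *. set (R := (1 - s) * r1 + s * r2) in *.
    set (lam := (x - L) / (R - L)).
    assert (E1 : 1 - lam = (R - x) / (R - L)) by (unfold lam; field; lra).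
    assert (Hl0 : 0 <= lam) by (unfold lam, Rdiv; apply Rmult_le_pos; [lra | left; apply Rinv_0_lt_compat; lra]).
    assert (Hl1 : 0 <= 1 - lam) by (rewrite E1; unfold Rdiv; apply Rmult_le_pos; [lra | left; apply Rinv_0_lt_compat; lra]).
    exists ((1 - s) * (1 - lam)), ((1 - s) * lam), (s * (1 - lam)), (s * lam).
    repeat split; try (apply Rmult_le_pos; lra); try ring; simpl.
    + unfold lam, L, R. field. unfold L, R in HLR. lra.
    + unfold s. rewrite Hy. field. lra.
Qed.

Theorem lemma1 (a d eps : R) (k : nat) (y1 y2 : Z) (l1 r1 l2 r2 : R) :
  (1 <= k)%nat ->
  0 < eps -> eps <= d / 2 ->
  a - eps > 0 -> a + INR k * d + eps < 1 ->
  (y2 - y1)%Z = Z.of_nat k ->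
  l1 < r1 -> l2 < r2 ->
  frac l1 = a + eps -> frac l2 = a + INR k * d + eps ->
  frac r1 = a - eps -> frac r2 = a + INR k * d - eps ->
  (Z.of_nat k | floorR l2 - floorR l1)%Z ->
  (Z.of_nat k | floorR r2 - floorR r1)%Z ->
  exists M : nat, forall t : R, 0 <= t <= 1 ->
    lattice_card
      (translate (t * -1, t * 0)
         (conv4 (l1, IZR y1) (r1, IZR y1) (l2, IZR y2) (r2, IZR y2)))
      (M + pulse (arith_prog a k d) eps (frac t))%nat.
Proof.
  intros Hk He Hed Ha Hak Hy Hlr1 Hlr2 Hf1 Hf2 Hf3 Hf4 Hd1 Hd2.
  unfold frac in Hf1, Hf2, Hf3, Hf4.
  set (Fl1 := floorR l1) in *. set (Fl2 := floorR l2) in *.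
  set (Fr1 := floorR r1) in *. set (Fr2 := floorR r2) in *.
  clearbody Fl1 Fl2 Fr1 Fr2.
  destruct Hd1 as [m Hm]. destruct Hd2 as [m' Hm'].
  assert (HK : 1 <= INR k) by (rewrite <- INR_1; apply le_INR; lia).
  assert (Hd : d > 0) by lra.
  assert (El1 : l1 = IZR Fl1 + (a + eps)) by lra.
  assert (El2 : l2 = IZR Fl2 + (a + INR k * d + eps)) by lra.
  assert (Er1 : r1 = IZR Fr1 + (a - eps)) by lra.
  assert (Er2 : r2 = IZR Fr2 + (a + INR k * d - eps)) by lra.
  assert (EFl2 : IZR Fl2 = IZR Fl1 + IZR m * INR k).
  { assert (Fl2 = Fl1 + m * Z.of_nat k)%Z as E by lia.
    rewrite E, plus_IZR, mult_IZR, <- INR_IZR_INZ. reflexivity. }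
  assert (EFr2 : IZR Fr2 = IZR Fr1 + IZR m' * INR k).
  { assert (Fr2 = Fr1 + m' * Z.of_nat k)%Z as E by lia.
    rewrite E, plus_IZR, mult_IZR, <- INR_IZR_INZ. reflexivity. }
  pose (FL := fun n : nat => (Fl1 + Z.of_nat n * m)%Z).
  pose (fL := fun n : nat => a + eps + INR n * d).
  pose (FR := fun n : nat => (Fr1 + Z.of_nat n * m')%Z).
  pose (fR := fun n : nat => a - eps + INR n * d).
  assert (Hnd : forall n, (n <= k)%nat -> 0 <= INR n * d <= INR k * d).
  { intros n Hn. split. apply Rmult_le_pos; [apply pos_INR | lra].
    apply Rmult_le_compat_r; [lra | apply le_INR; auto]. }
  assert (HfL : forall n, (n <= k)%nat -> 0 < fL n < 1).
  { intros n Hn. unfold fL. pose proof (Hnd n Hn). lra. }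
  assert (HfR : forall n, (n <= k)%nat -> 0 < fR n < 1).
  { intros n Hn. unfold fR. pose proof (Hnd n Hn). lra. }
  assert (HLn : forall n, (n <= k)%nat ->
     (1 - INR n / INR k) * l1 + (INR n / INR k) * l2 = IZR (FL n) + fL n).
  { intros n Hn. unfold FL, fL. rewrite plus_IZR, mult_IZR, <- INR_IZR_INZ.
    rewrite El1, El2, EFl2. field. lra. }
  assert (HRn : forall n, (n <= k)%nat ->
     (1 - INR n / INR k) * r1 + (INR n / INR k) * r2 = IZR (FR n) + fR n).
  { intros n Hn. unfold FR, fR. rewrite plus_IZR, mult_IZR, <- INR_IZR_INZ.
    rewrite Er1, Er2, EFr2. field. lra. }
  assert (Hsn : forall n, (n <= k)%nat -> 0 <= INR n / INR k <= 1).
  { intros n Hn. assert (INR n <= INR k) by (apply le_INR; auto). split.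
    - unfold Rdiv; apply Rmult_le_pos; [apply pos_INR | left; apply Rinv_0_lt_compat; lra].
    - apply Rmult_le_reg_r with (INR k); [lra|]. unfold Rdiv.
      rewrite Rmult_assoc, Rinv_l by lra. lra. }
  assert (HD : forall n, (n <= k)%nat -> (FR n - FL n >= 1)%Z).
  { intros n Hn. pose proof (LR_lt _ l1 r1 l2 r2 (Hsn n Hn) Hlr1 Hlr2) as H.
    rewrite HLn, HRn in H by auto.
    assert (IZR 0 < IZR (FR n - FL n)) as H0 by (rewrite minus_IZR; unfold fL, fR in *; lra).
    apply lt_IZR in H0. lia. }
  exists (Z.to_nat (zsum (fun n => (FR n - FL n)%Z) (seq 0 (S k)) - 1)).
  intros t Ht.
  pose (lo := fun n => (FL n + if Rlt_dec t (fL n) then 1 else 0)%Z).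
  pose (hi := fun n => (FR n - if Rlt_dec (fR n) t then 1 else 0)%Z).
  pose (rowl := fun n : nat => map (fun i : nat => (lo n + Z.of_nat i, y1 + Z.of_nat n)%Z)
                  (seq 0 (Z.to_nat (hi n - lo n + 1)))).
  assert (Hmem : forall X Y : Z,
    translate (t * -1, t * 0) (conv4 (l1, IZR y1) (r1, IZR y1) (l2, IZR y2) (r2, IZR y2))
      (IZR X, IZR Y) <->
    exists n, (n <= k)%nat /\ Y = (y1 + Z.of_nat n)%Z /\ (lo n <= X <= hi n)%Z).
  { intros X Y. rewrite translate_iff.
    rewrite (conv4_char l1 r1 l2 r2 (IZR y1) (IZR y2) (INR k)); [| lra | | lra | lra].
    2: { assert (y2 = y1 + Z.of_nat k)%Z as E by lia.
         rewrite E, plus_IZR, INR_IZR_INZ. reflexivity. }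
    split.
    - intros [Hs [HX1 HX2]].
      assert (HY : 0 <= IZR (Y - y1) <= INR k).
      { rewrite minus_IZR.
        assert (E : IZR Y - IZR y1 = ((IZR Y - IZR y1) / INR k) * INR k) by (field; lra).
        rewrite E. split; nra. }
      destruct HY as [HY1 HY2]. apply le_IZR in HY1.
      rewrite INR_IZR_INZ in HY2. apply le_IZR in HY2.
      exists (Z.to_nat (Y - y1)).
      assert (Hn : INR (Z.to_nat (Y - y1)) = IZR Y - IZR y1)
        by (rewrite INR_IZR_INZ, Z2Nat.id by lia; apply minus_IZR).
      assert (Hnk : (Z.to_nat (Y - y1) <= k)%nat) by lia.
      split; [auto | split; [lia |]].
      rewrite <- Hn in HX1, HX2. rewrite HLn in HX1 by auto. rewrite HRn in HX2 by auto.
      split.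
      + apply (proj1 (lo_char _ X _ t (HfL _ Hnk) Ht)); exact HX1.
      + apply (proj1 (hi_char _ X _ t (HfR _ Hnk) Ht)); exact HX2.
    - intros [n [Hn [-> [HX1 HX2]]]].
      assert (E : (IZR (y1 + Z.of_nat n) - IZR y1) / INR k = INR n / INR k)
        by (rewrite plus_IZR, <- INR_IZR_INZ; field; lra).
      rewrite E. rewrite HLn, HRn by auto.
      split; [apply Hsn; auto|]. split.
      + apply (proj2 (lo_char _ X _ t (HfL _ Hn) Ht)); exact HX1.
      + apply (proj2 (hi_char _ X _ t (HfR _ Hn) Ht)); exact HX2. }
  exists (flat_map rowl (seq 0 (S k))).
  split; [|split].
  - apply NoDup_flat_map'.
    + apply seq_NoDup.
    + intros n _. unfold rowl. apply row_nodup.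
    + intros n n' [X Y] H1 H2. unfold rowl in H1, H2.
      apply row_in in H1. apply row_in in H2. lia.
  - pose (b := fun n => if Rlt_dec (fR n) t then if Rlt_dec t (fL n) then 1%Z else 0%Z else 0%Z).
    assert (Hlen : Z.of_nat (length (flat_map rowl (seq 0 (S k))))
                   = zsum (fun n => (FR n - FL n) - b n)%Z (seq 0 (S k))).
    { rewrite length_flat_map_z. apply zsum_ext. intros n Hn. apply in_seq in Hn.
      assert (Hnk : (n <= k)%nat) by lia. pose proof (HD n Hnk).
      unfold rowl. rewrite length_map, length_seq.
      unfold hi, lo, b. destruct (Rlt_dec (fR n) t), (Rlt_dec t (fL n)); try lia.
      exfalso. unfold fR, fL in *. lra. }
    assert (Hge : (zsum (fun n => (FR n - FL n)%Z) (seq 0 (S k)) >= 1)%Z).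
    { pose proof (zsum_ge (fun n => (FR n - FL n)%Z) (seq 0 (S k))) as H.
      rewrite length_seq in H. assert (H' : (zsum (fun n => (FR n - FL n)%Z) (seq 0 (S k))
            >= Z.of_nat (S k))%Z).
      { apply H. intros n Hn. apply in_seq in Hn. apply HD. lia. }
      lia. }
    assert (Hb : zsum b (seq 0 (S k)) = (1 - Z.of_nat (pulse (arith_prog a k d) eps (frac t)))%Z).
    { unfold pulse. destruct (excluded_middle_informative _) as [Hex|Hnex].
      - destruct Hex as [y [[i [Hi ->]] Habs]].
        assert (Ht1 : t < 1).
        { destruct (Req_dec t 1) as [->|]; [|lra]. rewrite frac_one in Habs. exfalso.
          pose proof (Hnd i Hi). unfold Rabs in Habs; destruct Rcase_abs in Habs; lra. }
        rewrite frac_small in Habs by lra.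
        assert (Hb1 : fR i < t < fL i)
          by (unfold fR, fL; unfold Rabs in Habs; destruct Rcase_abs in Habs; lra).
        rewrite (zsum_one b _ i).
        + simpl. lia.
        + apply seq_NoDup.
        + apply in_seq; lia.
        + unfold b. destruct (Rlt_dec (fR i) t); [|lra]. destruct (Rlt_dec t (fL i)); [|lra].
          reflexivity.
        + intros n Hn Hne. apply in_seq in Hn. unfold b.
          destruct (Rlt_dec (fR n) t) as [h1|h1]; auto.
          destruct (Rlt_dec t (fL n)) as [h2|h2]; auto. exfalso.
          apply (proj1 (Nat.lt_gt_cases n i)) in Hne. destruct Hne as [h|h].
          * assert (INR (S n) <= INR i) as H by (apply le_INR; lia). rewrite S_INR in H.
            assert (INR n * d + d <= INR i * d) by nra. unfold fR, fL in *. lra.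
          * assert (INR (S i) <= INR n) as H by (apply le_INR; lia). rewrite S_INR in H.
            assert (INR i * d + d <= INR n * d) by nra. unfold fR, fL in *. lra.
      - rewrite zsum_zero; [simpl; lia|].
        intros n Hn. apply in_seq in Hn. assert (Hnk : (n <= k)%nat) by lia. unfold b.
        destruct (Rlt_dec (fR n) t) as [h1|h1]; auto.
        destruct (Rlt_dec t (fL n)) as [h2|h2]; auto. exfalso. apply Hnex.
        exists (a + INR n * d). split.
        + exists n. split; [lia | reflexivity].
        + pose proof (HfL n Hnk). rewrite frac_small by lra.
          unfold Rabs; destruct Rcase_abs; unfold fR, fL in *; lra. }
    rewrite zsum_sub in Hlen. lia.
  - intros [X Y]. cbn [fst snd]. rewrite Hmem. rewrite in_flat_map. split.
    + intros [n [Hn Hz]]. apply in_seq in Hn. unfold rowl in Hz. apply row_in in Hz.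
      exists n. split; [lia | exact Hz].
    + intros [n [Hn [HY HX]]]. exists n. split; [apply in_seq; lia|].
      unfold rowl. apply row_in. auto.
Qed.
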